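(* Let $\mathcal N$ be a monotone BAN of size $n$ and $x\to y$ a synchronous transition of $\mathcal N$. If there is no $x$-critical cycle of $\mathcal N$ whose node set is contained in $D(x,y)$, then there is a derivation from $x$ to $y$ consisting only of asynchronous transitions (i.e. $x\to^*_{a} y$). Consequently, if for some $m\ge2$ the network $\mathcal N$ has no critical cycle with at most $m$ distinct nodes, then every transition of size at most $m$ can be decomposed into a derivation of asynchronous transitions.
   Context: Let $n\ge 1$, $V=\{0,\dots,n-1\}$, $\mathbb B=\{0,1\}$; $\bar x^{i}$ is $x$ with coordinate $i$ negated; $D(x,y)=\{i:x_i\ne y_i\}$, $d(x,y)=|D(x,y)|$; $\mathbf s(1)=1,\mathbf s(0)=-1$. A BAN of size $n$ is a family $(f_i)_{i\in V}$, $f_i:\mathbb B^n\to\mathbb B$; monotone if for all $i,j$, either $\mathbf s(x_j)(f_i(x)-f_i(\bar x^{j}))\ge0$ for all $x$, or $\le0$ for all $x$. Structure $G=(V,A)$, $A=\{(j,i):\exists x,\ f_i(x)\ne f_i(\bar x^j)\}$; $\mathrm{sign}(j,i)=\mathbf s(x_j)(f_i(x)-f_i(\bar x^j))\in\{\pm1\}$ for any $x$ with $f_i(x)\ne f_i(\bar x^j)$. $U(x)=\{i:f_i(x)\ne x_i\}$; $\mathrm{FRUS}(x)=\{(j,i)\in A:\mathbf s(x_j)\mathbf s(x_i)=-\mathrm{sign}(j,i)\}$. A transition is a pair $(x,y)$ with $\emptyset\ne D(x,y)\subseteq U(x)$, written $x\to y$, of size $d(x,y)$; asynchronous if of size 1,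 synchronous if of size $\ge2$. A derivation is a finite sequence $x^0\to x^1\to\dots\to x^k$ ($k\ge1$) of transitions; $x\to^*_a y$ means there is a derivation from $x$ to $y$ made of asynchronous transitions. A cycle of $\mathcal N$ is a subgraph $(V_C,A_C)$ of $G$ made of the nodes and arcs of a closed directed walk with no repeated arcs (nodes may repeat); it is $x$-critical if $V_C\subseteq U(x)$ and $A_C\subseteq\mathrm{FRUS}(x)$, and critical if $x$-critical for some $x$. *)

(* Defs.v *)
From HB Require Import structures.
From mathcomp Require Import all_boot all_order all_algebra.
Set Implicit Arguments. Unset Strict Implicit. Unset Printing Implicit Defensive.
Import GRing.Theory Num.Theory.

Definition config (n : nat) := {ffun 'I_n -> bool}.

Definition BAN (n : nat) := 'I_n -> config n -> bool.

Section BANdefs.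
Variable n : nat.
Implicit Types (f : BAN n) (x y : config n) (i j : 'I_n).

Definition flip x j : config n := [ffun k => if k == j then ~~ x k else x k].

Definition sgn (b : bool) : int := if b then 1%R else (-1)%R.

Definition bint (b : bool) : int := if b then 1%R else 0%R.

Definition effect f x j i : int :=
  (sgn (x j) * (bint (f i x) - bint (f i (flip x j))))%R.

Definition monotone f : Prop :=
  forall i j, (forall x, (0 <= effect f x j i)%R) \/ (forall x, (effect f x j i <= 0)%R).

Definition arc f j i : bool := [exists x, f i x != f i (flip x j)].

(* sign(j,i), computed at some x witnessing the arc (0 if not an arc) *)
Definition sign f j i : int :=
  match [pick x | f i x != f i (flip x j)] with
  | Some x => effect f x j i
  | None => 0%R
  end.

Definition Uset f x : {set 'I_n} := [set i | f i x != x i].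
Definition Dset x y : {set 'I_n} := [set i | x i != y i].

Definition frus f x j i : bool :=
  arc f j i && (sgn (x j) * sgn (x i) == - sign f j i)%R.

Definition transition f x y : Prop :=
  Dset x y != set0 /\ Dset x y \subset Uset f x.

Definition async_transition f x y : Prop :=
  transition f x y /\ #|Dset x y| = 1.

Inductive async_deriv f : config n -> config n -> Prop :=
| ad_one x y : async_transition f x y -> async_deriv f x y
| ad_cons x y z : async_transition f x y -> async_deriv f y z -> async_deriv f x z.

(* Arcs of the closed walk w = [v0; ...; v_{k-1}] : (v_t, v_{t+1 mod k}) *)
Definition walk_arcs (w : seq 'I_n) : seq ('I_n * 'I_n) := zip w (rot 1 w).

(* w is a closed directed walk of G with no repeated arcs; the cycle is the
   subgraph with node set [set v in w] and arc set [set a in walk_arcs w]. *)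
Definition cycle_walk f (w : seq 'I_n) : bool :=
  (w != [::]) && all (fun a => arc f a.1 a.2) (walk_arcs w) && uniq (walk_arcs w).

Definition x_critical f x (w : seq 'I_n) : bool :=
  all (fun v => v \in Uset f x) w && all (fun a => frus f x a.1 a.2) (walk_arcs w).

Definition cycle_nodes (w : seq 'I_n) : nat := size (undup w).

End BANdefs.

(* Main.v *)
Require Import Defs.
From HB Require Import structures.
From mathcomp Require Import all_boot all_order all_algebra.
Set Implicit Arguments. Unset Strict Implicit. Unset Printing Implicit Defensive.
Import GRing.Theory Num.Theory.

Section S.
Variables (n : nat) (f : BAN n).
Hypothesis hmon : monotone f.

Lemma flip_same (x : config n) i : flip x i i = ~~ x i.
Proof. by rewrite /flip ffunE eqxx. Qed.
Lemma flip_other (x : config n) i j : j != i -> flip x i j = x j.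
Proof. by move=> h; rewrite /flip ffunE (negbTE h). Qed.

Lemma eff_pm x j i : f i x != f i (flip x j) ->
  effect f x j i = 1%R \/ effect f x j i = (-1)%R.
Proof.
rewrite /effect; case: (x j); case: (f i x); case: (f i (flip x j)) => //=; auto.
Qed.

Lemma sign_eff x j i : f i x != f i (flip x j) -> sign f j i = effect f x j i.
Proof.
move=> hx; rewrite /sign; case: pickP => [x0 hx0|/(_ x)]; last by rewrite hx.
have [e0|e0] := eff_pm hx0; have [e|e] := eff_pm hx; rewrite e0 e //;
case: (hmon i j) => h; have h1 := h x; have h0 := h x0.
- by rewrite e in h1.
- by rewrite e0 in h0.
- by rewrite e0 in h0.
- by rewrite e in h1.
Qed.

Lemma disable_frus x i j : f j x != x j -> f j (flip x i) != f j x -> frus f x i j.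
Proof.
move=> hj hd; rewrite /frus.
have ha : Defs.arc f i j by apply/existsP; exists x; rewrite eq_sym.
rewrite ha /= (sign_eff (x:=x)); last by rewrite eq_sym.
rewrite /effect.
have e1 : f j x = ~~ x j by move: hj; case: (f j x); case: (x j).
have e2 : f j (flip x i) = x j by move: hd; rewrite e1; case: (f j (flip x i)); case: (x j).
by rewrite e1 e2; case: (x i); case: (x j).
Qed.

Lemma zip_path_all (e : rel 'I_n) a p b : path e a (rcons p b) ->
  all (fun uv => e uv.1 uv.2) (zip (a :: p) (rcons p b)).
Proof.
elim: p a => [|c p IH] a /=; first by rewrite andbT.
by case/andP=> -> /IH.
Qed.

Definition NoCrit x (S : {set 'I_n}) :=
  ~ exists w : seq 'I_n,
    [&& cycle_walk f w, x_critical f x w & all (fun v => v \in S) w].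

Lemma sink_exists x (S : {set 'I_n}) : S \subset Uset f x -> S != set0 -> NoCrit x S ->
  exists2 i, i \in S & forall j, j \in S -> j != i -> ~~ frus f x i j.
Proof.
move=> hSU hS0 hnc.
case: (boolP [exists i in S, forall j in S, (j != i) ==> ~~ frus f x i j]).
  case/exists_inP=> i iS /forall_inP h; exists i => // j jS ji.
  by have := h j jS; rewrite ji.
rewrite negb_exists_in => /forall_inP hno; exfalso; apply: hnc.
pose g i := if [pick j | [&& j \in S, j != i & frus f x i j]] is Some j then j else i.
have gS i : i \in S -> [&& g i \in S, g i != i & frus f x i (g i)].
  move=> iS; rewrite /g; case: pickP => // hn.
  have := hno i iS; rewrite negb_forall_in => /existsP [j /andP [jS]].
  rewrite negb_imply negbK => /andP [ji fr]; by have := hn j; rewrite jS ji fr.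
case/set0Pn: hS0 => a aS.
have itS k : iter k g a \in S.
  by elim: k => //= k IH; case/and3P: (gS _ IH).
have [i ilt ei] : exists2 i, i < order g a & iter (order g a) g a = iter i g a.
  by apply/trajectP; apply: looping_order.
pose b := iter i g a.
have hcyc : fcycle g (orbit g b).
  apply: ((orbitPcycle (f:=g) (x:=b) 3 0).1); exists (order g a - i).-1.
  rewrite prednK ?subn_gt0 // /b -iterD subnK ?ei //; exact: ltnW.
have inS y : y \in orbit g b -> y \in S.
  rewrite -fconnect_orbit => /connectP [p hp ->].
  have : b \in S by rewrite /b itS.
  elim: p (b) hp => [|z p IH] k //=.
  case/andP=> /eqP <- hp kS; apply: IH => //; by case/and3P: (gS _ kS).
move Ew: (orbit g b) hcyc inS => w hcyc inS.
have uw : uniq w by rewrite -Ew orbit_uniq.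
case: w Ew hcyc inS uw => [|c p] Ew hcyc inS uw.
  by have := in_orbit g b; rewrite Ew.
exists (c :: p).
have hall : all (fun uv => frel g uv.1 uv.2) (walk_arcs (c :: p)).
  by rewrite /walk_arcs rot1_cons; exact: (zip_path_all hcyc).
have hmem uv : uv \in walk_arcs (c :: p) -> uv.1 \in c :: p.
  rewrite /walk_arcs => /(map_f fst); rewrite -/(unzip1 _) unzip1_zip //.
  by rewrite size_rot.
have hfr : all (fun a => frus f x a.1 a.2) (walk_arcs (c :: p)).
  apply/allP => uv uvin; have := allP hall _ uvin => /= /eqP <-.
  by case/and3P: (gS _ (inS _ (hmem _ uvin))).
apply/and3P; split.
- rewrite /cycle_walk /=; apply/andP; split.
    apply/allP => uv uvin; have := allP hfr _ uvin; by case/andP.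
  rewrite /walk_arcs; apply: (@map_uniq _ _ fst); rewrite -/(unzip1 _) unzip1_zip //.
  by rewrite size_rot.
- rewrite /x_critical hfr andbT; apply/allP => v vin.
  exact: (subsetP hSU) (inS _ vin).
- by apply/allP.
Qed.

Lemma frus_flip x i a b : a != i -> b != i -> frus f (flip x i) a b = frus f x a b.
Proof. by move=> ha hb; rewrite /frus !flip_other. Qed.

Lemma main_ind k : forall x y : config n, #|Dset x y| = k.+1 -> transition f x y ->
  NoCrit x (Dset x y) -> async_deriv f x y.
Proof.
elim: k => [|k IH] x y hc htr hnc; first by apply: ad_one; split.
case: (htr) => hD0 hDU.
have [i iD hsink] := sink_exists hDU hD0 hnc.
set x' := flip x i.
have Dxx : Dset x x' = [set i].
  apply/setP => j; rewrite !inE; case: (eqVneq j i) => [->|ji].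
    by rewrite /x' flip_same; case: (x i).
  by rewrite /x' flip_other // eqxx.
have Dx'y : Dset x' y = Dset x y :\ i.
  apply/setP => j; rewrite !inE; case: (eqVneq j i) => [->|ji] /=.
    by move: iD; rewrite inE /x' flip_same; case: (x i); case: (y i).
  by rewrite /x' flip_other.
have hc' : #|Dset x' y| = k.+1.
  by move: hc; rewrite (cardsD1 i) iD Dx'y add1n => -[].
have iU : i \in Uset f x by apply: (subsetP hDU).
apply: (ad_cons (y:=x')).
  split; last by rewrite Dxx cards1.
  split; first by rewrite Dxx; apply/set0Pn; exists i; rewrite inE.
  by rewrite Dxx sub1set.
apply: IH => //.
  split; first by apply/set0Pn; apply/card_gt0P; rewrite hc'.
  apply/subsetP => j; rewrite Dx'y in_setD1 => /andP [ji jD].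
  have jU : j \in Uset f x by apply: (subsetP hDU).
  move: jU; rewrite !inE => hj.
  rewrite /x' flip_other //.
  case: (eqVneq (f j (flip x i)) (f j x)) => [-> //|hd].
  by have := hsink j jD ji; rewrite (disable_frus hj hd).
move=> [w /and3P [hcw hcr hall]]; apply: hnc; exists w.
have wi v : v \in w -> v != i.
  by move=> vw; have := allP hall v vw; rewrite Dx'y !inE => /andP [].
have wD v : v \in w -> v \in Dset x y.
  by move=> vw; have := allP hall v vw; rewrite Dx'y !inE => /andP [].
apply/and3P; split => //.
- case/andP: hcr => _ hfr; rewrite /x_critical; apply/andP; split.
    by apply/allP => v vw; apply: (subsetP hDU); apply: wD.
  apply/allP => uv uvin; have := allP hfr uv uvin.
  have h1 : uv.1 \in w.
    move: uvin; rewrite /walk_arcs => /(map_f fst); rewrite -/(unzip1 _) unzip1_zip //.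
    by rewrite size_rot.
  have h2 : uv.2 \in w.
    move: uvin; rewrite /walk_arcs => /(map_f snd); rewrite -/(unzip2 _) unzip2_zip //.
      by rewrite mem_rot.
    by rewrite size_rot.
  by rewrite frus_flip // wi.
- by apply/allP.
Qed.

End S.

Theorem mainTheorem5 (n : nat) (hn : 0 < n) (f : BAN n) (hmon : monotone f) :
  (forall x y : config n,
     transition f x y -> 2 <= #|Dset x y| ->
     ~ (exists w : seq 'I_n,
          [&& cycle_walk f w, x_critical f x w & all (fun v => v \in Dset x y) w]) ->
     async_deriv f x y)
  /\
  (forall m : nat, 2 <= m ->
     ~ (exists (z : config n) (w : seq 'I_n),
          [&& cycle_walk f w, x_critical f z w & cycle_nodes w <= m]) ->
     forall x y : config n, transition f x y -> #|Dset x y| <= m -> async_deriv f x y).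
Proof.
have gen : forall x y : config n, transition f x y -> NoCrit f x (Dset x y) -> async_deriv f x y.
  move=> x y htr hnc; case: (htr) => hD0 _.
  have : 0 < #|Dset x y| by apply/card_gt0P; apply/set0Pn.
  case E: #|Dset x y| => [//|k] _; exact: (main_ind hmon E).
split; first by move=> x y htr _ hnc; exact: gen.
move=> m _ hm x y htr hle; apply: gen => // -[w /and3P [hcw hcr hall]].
apply: hm; exists x, w; rewrite hcw hcr /=.
apply: leq_trans hle; rewrite /cycle_nodes.
have -> : size (undup w) = #|[set v in undup w]|.
  by rewrite cardsE (card_uniqP _) // undup_uniq.
apply: subset_leq_card; apply/subsetP => v; rewrite inE mem_undup => vw.
exact: (allP hall).
Qed.
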